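(* Let $d\ge1$ and let $x_1,\dots,x_t$ be positive integers such that no value occurs more than $d$ times among them. Then $\prod_{i=1}^t x_i\ge\big(\frac{t}{ed}\big)^t$. *)

(* Defs.v *)
From Stdlib Require Export Reals List Arith Lia Lra.
Export ListNotations.

(* Main.v *)
Require Import Defs.
Open Scope R_scope.

Definition rmv (M : nat) (l : list nat) := filter (fun x => negb (Nat.eqb x M)) l.

Lemma rmv_len M l : length l = (count_occ Nat.eq_dec l M + length (rmv M l))%nat.
Proof.
  induction l as [|a l IH]; simpl; auto.
  destruct (Nat.eq_dec a M) as [e|n].
  - subst. rewrite Nat.eqb_refl. simpl. lia.
  - apply Nat.eqb_neq in n. rewrite n. simpl. lia.
Qed.

Lemma rmv_cnt M l v : (count_occ Nat.eq_dec (rmv M l) v <= count_occ Nat.eq_dec l v)%nat.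
Proof.
  induction l as [|a l IH]; simpl; auto.
  destruct (Nat.eqb a M); simpl; destruct (Nat.eq_dec a v); lia.
Qed.

Lemma count_bound d : forall M xs,
  (forall x, In x xs -> (0 < x <= M)%nat) ->
  (forall v : nat, (count_occ Nat.eq_dec xs v <= d)%nat) ->
  (length xs <= d * M)%nat.
Proof.
  induction M as [|k IH]; intros xs H1 H2.
  - destruct xs as [|a xs]; simpl; [lia|]. specialize (H1 a (or_introl eq_refl)). lia.
  - rewrite (rmv_len (S k) xs).
    assert (length (rmv (S k) xs) <= d * k)%nat.
    { apply IH.
      - intros x Hx. unfold rmv in Hx. apply filter_In in Hx as [Hx Hn].
        specialize (H1 x Hx). apply Bool.negb_true_iff, Nat.eqb_neq in Hn. lia.
      - intros v. pose proof (rmv_cnt (S k) xs v). specialize (H2 v). lia. }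
    specialize (H2 (S k)). lia.
Qed.

Lemma max_in : forall l, l <> nil -> In (list_max l) l.
Proof.
  induction l as [|a l IH]; intros H; [congruence|].
  simpl. destruct l as [|b l].
  - simpl. left. lia.
  - destruct (Nat.max_spec a (list_max (b :: l))) as [[_ E]|[_ E]]; rewrite E.
    + right. apply IH. congruence.
    + left. reflexivity.
Qed.

Lemma prod_app l1 l2 : fold_right Nat.mul 1%nat (l1 ++ l2) =
  (fold_right Nat.mul 1%nat l1 * fold_right Nat.mul 1%nat l2)%nat.
Proof. induction l1; simpl; lia. Qed.

Lemma nat_main d : forall n xs, length xs = n ->
  (forall x, In x xs -> (0 < x)%nat) ->
  (forall v : nat, (count_occ Nat.eq_dec xs v <= d)%nat) ->
  (fact n <= d ^ n * fold_right Nat.mul 1%nat xs)%nat.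
Proof.
  induction n as [|m IH]; intros xs Hl H1 H2.
  - simpl. destruct xs; simpl in *; [lia|discriminate].
  - assert (Hne : xs <> nil) by (intro; subst; discriminate).
    set (M := list_max xs).
    assert (HM : In M xs) by (apply max_in; auto).
    assert (Hb : (S m <= d * M)%nat).
    { rewrite <- Hl. apply (count_bound d M xs); auto.
      intros x Hx. split; auto. unfold M.
      pose proof (proj1 (list_max_le xs (list_max xs)) (le_n _)) as F.
      rewrite Forall_forall in F. auto. }
    apply in_split in HM as [l1 [l2 E]].
    assert (Hr : (fact m <= d ^ m * fold_right Nat.mul 1%nat (l1 ++ l2))%nat).
    { apply IH.
      - rewrite E in Hl. rewrite length_app in *. simpl in Hl. lia.
      - intros x Hx. apply H1. rewrite E. apply in_app_or in Hx as [Hx|Hx]; apply in_or_app; simpl; auto.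
      - intros v. specialize (H2 v). rewrite E in H2.
        destruct (Nat.eq_dec M v).
        + rewrite count_occ_elt_eq in H2 by auto. lia.
        + rewrite count_occ_elt_neq in H2 by auto. lia. }
    rewrite E, prod_app. rewrite prod_app in Hr. simpl.
    change (fact (S m)) with (S m * fact m)%nat.
    set (P1 := fold_right Nat.mul 1%nat l1) in *.
    set (P2 := fold_right Nat.mul 1%nat l2) in *.
    set (F := fact m) in *. set (D := (d ^ m)%nat) in *.
    assert (S m * F <= (d * M) * (D * (P1 * P2)))%nat.
    { apply Nat.mul_le_mono; auto. }
    nia.
Qed.

Lemma exp_pow_nat x : forall n, exp x ^ n = exp (INR n * x).
Proof.
  induction n as [|n IH].
  - simpl. rewrite Rmult_0_l, exp_0. reflexivity.
  - rewrite S_INR. simpl pow. rewrite IH. rewrite <- exp_plus. f_equal. ring.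
Qed.

Lemma step t : INR (S t) ^ t <= exp 1 * INR t ^ t.
Proof.
  destruct t as [|t].
  - simpl. pose proof (exp_ineq1 1). lra.
  - set (u := INR (S t)).
    assert (Hu : 0 < u) by (apply lt_0_INR; lia).
    assert (E : INR (S (S t)) = u * (1 + / u)) by (rewrite S_INR; fold u; field; lra).
    rewrite E, Rpow_mult_distr.
    assert ((1 + / u) ^ S t <= exp 1).
    { replace (exp 1) with ((exp (/ u)) ^ (S t)).
      - apply pow_incr. split.
        + assert (0 < / u) by (apply Rinv_0_lt_compat; lra). lra.
        + pose proof (exp_ineq1 (/ u)) as X. assert (0 < / u) by (apply Rinv_0_lt_compat; lra). lra.
      - rewrite exp_pow_nat. f_equal. fold u. field. lra. }
    assert (0 <= u ^ S t) by (apply pow_le; lra).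
    nra.
Qed.

Lemma fact_bound : forall t, INR t ^ t <= exp 1 ^ t * INR (fact t).
Proof.
  induction t as [|t IH].
  - simpl. lra.
  - change (fact (S t)) with (S t * fact t)%nat. rewrite mult_INR.
    change (INR (S t) ^ S t) with (INR (S t) * INR (S t) ^ t).
    change (exp 1 ^ S t) with (exp 1 * exp 1 ^ t). pose proof (step t).
    assert (0 < exp 1) by apply exp_pos.
    assert (0 <= INR (S t)) by apply pos_INR.
    assert (0 <= exp 1 ^ t) by (apply pow_le; lra).
    assert (INR (S t) * INR (S t) ^ t <= INR (S t) * (exp 1 * INR t ^ t)) by (apply Rmult_le_compat_l; auto).
    assert (exp 1 * INR t ^ t <= exp 1 * (exp 1 ^ t * INR (fact t))) by (apply Rmult_le_compat_l; lra).
    assert (INR (S t) * (exp 1 * INR t ^ t) <= INR (S t) * (exp 1 * (exp 1 ^ t * INR (fact t)))) by (apply Rmult_le_compat_l; auto).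
    lra.
Qed.

Theorem proposition7p2 (d : nat) (xs : list nat) :
  (1 <= d)%nat ->
  (forall x, In x xs -> (0 < x)%nat) ->
  (forall v : nat, (count_occ Nat.eq_dec xs v <= d)%nat) ->
  INR (fold_right Nat.mul 1%nat xs) >=
    (INR (length xs) / (exp 1 * INR d)) ^ (length xs).
Proof.
  intros Hd H1 H2.
  pose proof (nat_main d (length xs) xs eq_refl H1 H2) as N.
  apply le_INR in N. rewrite mult_INR, pow_INR in N.
  set (t := length xs) in *.
  pose proof (fact_bound t) as F.
  assert (HD : 1 <= INR d) by (apply (le_INR 1); auto).
  assert (He : 0 < exp 1) by apply exp_pos.
  unfold Rdiv. rewrite !Rpow_mult_distr, Rinv_mult, Rpow_mult_distr.
  rewrite !pow_inv.
  assert (0 < exp 1 ^ t) by (apply pow_lt; lra).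
  assert (0 < INR d ^ t) by (apply pow_lt; lra).
  apply Rle_ge.
  apply (Rmult_le_reg_r (exp 1 ^ t * INR d ^ t)); [nra|].
  replace (INR t ^ t * (/ exp 1 ^ t * / INR d ^ t) * (exp 1 ^ t * INR d ^ t))
    with (INR t ^ t) by (field; lra).
  nra.
Qed.
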